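(* For every $w\in W^\star$ and every integer $n\ge1$, $$(B^\dagger)^n|0,w\rangle=2^{-n/2}|n,w\rangle\qquad\text{and}\qquad B^\dagger B|n,w\rangle=2^{-1}|n,w\rangle.$$
   Context: $\Omega=\{0,1\}^{\mathbb N}$ with the shift $\sigma$; for $a\in\{0,1\}$, $ax=(a,x_1,\dots)$. $\mu$ is the measure of maximal entropy (uniform Bernoulli product measure), $L^2(\mu)$ the Hilbert space of square-integrable functions. Ruelle operator $L\phi(x)=\frac12(\phi(0x)+\phi(1x))$; Koopman operator $K\phi=\phi\circ\sigma$; $B=2^{-1/2}L$, $B^\dagger=2^{-1/2}K$. $W$ is the set of finite words over $\{0,1\}$ (including the empty word $\varepsilon$), $\ell(v)$ the length of $v$, $uv$ concatenation, $[v]$ the cylinder of sequences starting with $v$, $\chi_{[v]}$ its indicator. For nonempty $v$, $e_v=2^{\ell(v)/2}(\chi_{[v1]}-\chi_{[v0]})$; also $e^0_\varepsilon=-2^{1/2}\chi_{[0]}$, $e^1_\varepsilon=2^{1/2}\chi_{[1]}$. Define $|0\rangle=2^{-1/2}(e^0_\varepsilon+e^1_\varepsilon)$ and $|n\rangle=2^{-n/2}\sum_{\ell(v)=n}e_v$ for $n\ge1$. For $w\in W$ define $|0,w\rangle=2^{-1/2}(e_{0w}-e_{1w})$ and, for $n\ge1$, $|n,w\rangle=2^{-(n+1)/2}\big(\sum_{\ell(u)=n}e_{u0w}-\sum_{\ell(u)=n}e_{u1w}\big)$. Let $W^\star=\{\star\}\cup W$ and set $|n,\star\rangle=|n\rangle$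 for all $n\ge0$. *)

(* Defs.v *)
From Stdlib Require Import Reals List.
Open Scope R_scope.

(* Omega = {0,1}^N, sequences x_1 x_2 ... encoded as nat -> bool with
   index 0 the first letter; false = 0, true = 1. *)
Definition Omega := nat -> bool.

Definition word := list bool.

Definition cons_seq (a : bool) (x : Omega) : Omega :=
  fun n => match n with O => a | S k => x k end.

Definition shift (x : Omega) : Omega := fun n => x (S n).

Fixpoint in_cyl (v : word) (x : Omega) : bool :=
  match v with
  | nil => true
  | a :: v' => Bool.eqb (x O) a && in_cyl v' (shift x)
  end.

Definition chi (v : word) : Omega -> R :=
  fun x => if in_cyl v x then 1 else 0.

Definition Ruelle (phi : Omega -> R) : Omega -> R :=
  fun x => (phi (cons_seq false x) + phi (cons_seq true x)) / 2.
Definition Koopman (phi : Omega -> R) : Omega -> R :=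
  fun x => phi (shift x).
Definition Bop (phi : Omega -> R) : Omega -> R :=
  fun x => / sqrt 2 * Ruelle phi x.
Definition Bdag (phi : Omega -> R) : Omega -> R :=
  fun x => / sqrt 2 * Koopman phi x.

Definition fscale (c : R) (f : Omega -> R) : Omega -> R := fun x => c * f x.
Definition fadd (f g : Omega -> R) : Omega -> R := fun x => f x + g x.
Definition fsub (f g : Omega -> R) : Omega -> R := fun x => f x - g x.

Fixpoint words (n : nat) : list word :=
  match n with
  | O => nil :: nil
  | S k => map (cons false) (words k) ++ map (cons true) (words k)
  end.

Definition sum_words (n : nat) (F : word -> Omega -> R) : Omega -> R :=
  fun x => fold_right (fun u acc => F u x + acc) 0 (words n).

(* e_v = 2^{l(v)/2} (chi_[v1] - chi_[v0])  (used only for nonempty v) *)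
Definition e_ (v : word) : Omega -> R :=
  fscale (sqrt 2 ^ length v) (fsub (chi (v ++ true :: nil)) (chi (v ++ false :: nil))).

Definition e0_eps : Omega -> R := fscale (- sqrt 2) (chi (false :: nil)).
Definition e1_eps : Omega -> R := fscale (sqrt 2) (chi (true :: nil)).

(* W^star = {star} u W, encoded as option word with None = star *)
Definition Wstar := option word.

Definition ket (n : nat) (w : Wstar) : Omega -> R :=
  match w, n with
  | None, O => fscale (/ sqrt 2) (fadd e0_eps e1_eps)
  | None, S _ => fscale (/ sqrt 2 ^ n) (sum_words n e_)
  | Some w, O => fscale (/ sqrt 2) (fsub (e_ (false :: w)) (e_ (true :: w)))
  | Some w, S _ =>
      fscale (/ sqrt 2 ^ (n + 1))
        (fsub (sum_words n (fun u => e_ (u ++ false :: w)))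
              (sum_words n (fun u => e_ (u ++ true :: w))))
  end.

(* Main.v *)
Require Import Defs.
From Stdlib Require Import Reals List Lra Lia FunctionalExtensionality.
Open Scope R_scope.

Definition sumw (l : list word) (F : word -> R) : R :=
  fold_right (fun u acc => F u + acc) 0 l.

Lemma sumw_app l1 l2 F : sumw (l1 ++ l2) F = sumw l1 F + sumw l2 F.
Proof. induction l1; simpl; [lra| rewrite IHl1; lra]. Qed.

Lemma sumw_map f l F : sumw (map f l) F = sumw l (fun u => F (f u)).
Proof. induction l; simpl; [lra| rewrite IHl; lra]. Qed.

Lemma sumw_ext l F G : (forall u, In u l -> F u = G u) -> sumw l F = sumw l G.
Proof. induction l; simpl; intros H; [lra|]. rewrite H, IHl; auto. Qed.

Lemma sumw_lin l c F G : sumw l (fun u => c * (F u - G u)) = c * (sumw l F - sumw l G).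
Proof. induction l; simpl; [lra| rewrite IHl; lra]. Qed.

Lemma sumw_sub l F G : sumw l (fun u => F u - G u) = sumw l F - sumw l G.
Proof. induction l; simpl; [lra| rewrite IHl; lra]. Qed.

Lemma words_len n u : In u (words n) -> length u = n.
Proof.
  revert u; induction n; simpl; intros u H.
  - destruct H as [H|[]]; subst; reflexivity.
  - apply in_app_or in H; destruct H as [H|H]; apply in_map_iff in H;
    destruct H as [v [<- Hv]]; simpl; rewrite IHn; auto.
Qed.

Lemma iter_shift_swap n x : Nat.iter n shift (shift x) = shift (Nat.iter n shift x).
Proof. induction n; simpl; [reflexivity| rewrite IHn; reflexivity]. Qed.

Lemma iter_S m z : Nat.iter (S m) shift z = Nat.iter m shift (shift z).
Proof. simpl; symmetry; apply iter_shift_swap. Qed.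

Lemma chi_cons a v x : chi (a :: v) x = (if Bool.eqb (x O) a then chi v (shift x) else 0).
Proof. unfold chi; simpl. destruct (Bool.eqb (x O) a); simpl; reflexivity. Qed.

Lemma keyA n s x : sumw (words n) (fun u => chi (u ++ s) x) = chi s (Nat.iter n shift x).
Proof.
  revert x; induction n; intros x; simpl.
  - unfold sumw; simpl; lra.
  - rewrite sumw_app, !sumw_map.
    rewrite (sumw_ext _ _ (fun u => if Bool.eqb (x O) false then chi (u ++ s) (shift x) else 0))
      by (intros; simpl; apply chi_cons).
    rewrite (sumw_ext _ (fun u => chi ((true :: u) ++ s) x) (fun u => if Bool.eqb (x O) true then chi (u ++ s) (shift x) else 0))
      by (intros; simpl; apply chi_cons).
    destruct (x O); simpl.
    + rewrite IHn. replace (sumw (words n) (fun _ => 0)) with 0.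
      * rewrite iter_shift_swap; lra.
      * clear; induction (words n); simpl; [reflexivity| unfold sumw in *; simpl; lra].
    + rewrite IHn. replace (sumw (words n) (fun _ => 0)) with 0.
      * rewrite iter_shift_swap; lra.
      * clear; induction (words n); simpl; [reflexivity| unfold sumw in *; simpl; lra].
Qed.

Lemma sqrt2_neq0 : sqrt 2 <> 0.
Proof. apply Rgt_not_eq, sqrt_lt_R0; lra. Qed.

Lemma ket_iter n w x : (1 <= n)%nat -> ket n w x = ket 0 w (Nat.iter n shift x).
Proof.
  intros Hn. destruct n as [|m]; [lia|].
  pose proof sqrt2_neq0 as H2.
  destruct w as [w|].
  - unfold ket, fscale, fsub, sum_words.
    change (fold_right (fun u acc => e_ (u ++ false :: w) x + acc) 0 (words (S m)))
      with (sumw (words (S m)) (fun u => e_ (u ++ false :: w) x)).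
    change (fold_right (fun u acc => e_ (u ++ true :: w) x + acc) 0 (words (S m)))
      with (sumw (words (S m)) (fun u => e_ (u ++ true :: w) x)).
    assert (E : forall b, sumw (words (S m)) (fun u => e_ (u ++ b :: w) x) =
       sqrt 2 ^ (S m + S (length w)) * (chi (b :: w ++ true :: nil) (Nat.iter (S m) shift x)
                                   - chi (b :: w ++ false :: nil) (Nat.iter (S m) shift x))).
    { intros b. rewrite (sumw_ext _ _ (fun u => sqrt 2 ^ (S m + S (length w)) *
          (chi (u ++ (b :: w ++ true :: nil)) x - chi (u ++ (b :: w ++ false :: nil)) x))).
      - rewrite sumw_lin, !keyA; reflexivity.
      - intros u Hu. unfold e_, fscale, fsub. rewrite length_app, (words_len _ _ Hu).
        simpl. rewrite <- !app_assoc. reflexivity. }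
    rewrite !E. unfold e_, fscale, fsub. simpl length.
    rewrite !pow_add. simpl app.
    assert (sqrt 2 ^ S m <> 0) by (apply pow_nonzero; auto).
    simpl pow. field; split; auto; apply pow_nonzero; auto.
  - unfold ket, fscale, fsub, fadd, sum_words, e0_eps, e1_eps.
    change (fold_right (fun u acc => e_ u x + acc) 0 (words (S m)))
      with (sumw (words (S m)) (fun u => e_ u x)).
    rewrite (sumw_ext _ _ (fun u => sqrt 2 ^ (S m) *
          (chi (u ++ (true :: nil)) x - chi (u ++ (false :: nil)) x))).
    + rewrite sumw_lin, !keyA.
      assert (sqrt 2 ^ S m <> 0) by (apply pow_nonzero; auto).
      unfold fscale. simpl pow. field; split; auto; apply pow_nonzero; auto.
    + intros u Hu. unfold e_, fscale, fsub. rewrite (words_len _ _ Hu). reflexivity.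
Qed.

Lemma iter_Bdag n f x : Nat.iter n Bdag f x = (/ sqrt 2) ^ n * f (Nat.iter n shift x).
Proof.
  revert x; induction n; intros x; simpl; [lra|].
  unfold Bdag at 1, Koopman. rewrite IHn, iter_shift_swap. ring.
Qed.

Theorem proposition3p4 (w : Wstar) (n : nat) (hn : (1 <= n)%nat) :
  Nat.iter n Bdag (ket 0 w) = fscale (/ sqrt 2 ^ n) (ket n w) /\
  Bdag (Bop (ket n w)) = fscale (/ 2) (ket n w).
Proof.
  pose proof sqrt2_neq0 as H2.
  split; apply functional_extensionality; intros x.
  - rewrite iter_Bdag. unfold fscale. rewrite (ket_iter n w x hn).
    rewrite pow_inv. reflexivity.
  - unfold Bdag, Bop, Koopman, Ruelle, fscale.
    rewrite !(ket_iter n w _ hn).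
    destruct n as [|m]; [lia|].
    assert (E : forall a : bool, Nat.iter (S m) shift (Defs.cons_seq a (shift x)) = Nat.iter (S m) shift x).
    { intros a. rewrite !iter_S. reflexivity. }
    rewrite !E.
    assert (sqrt 2 * sqrt 2 = 2) by (apply sqrt_sqrt; lra).
    replace (/ 2) with (/ sqrt 2 * / sqrt 2) by (rewrite <- Rinv_mult, H; reflexivity).
    field; auto.
Qed.
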